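(* Consider any algorithm in $\mathcal{A}$ run over either the nearest-neighbor graph $\mathcal{G}^\mu_{x(k)}$ or the nearest-value graph $\mathcal{G}^{\mu v}_{x(k)}$ (for some positive integer $\mu$). For any two nodes $u,v\in\mathcal{V}$ and any time $k$: (i) if $x_u(k)=x_v(k)$ then $x_u(k+1)=x_v(k+1)$; (ii) if $x_u(k)<x_v(k)$ then $x_u(k+1)\le x_v(k+1)$.
   Context: Nodes $\mathcal{V}=\{1,\dots,n\}$, $n\ge3$, states $x_i(k)\in\mathbb{R}$, discrete time. The algorithm class $\mathcal{A}$: each node updates $$x_i(k+1)=\eta_k x_i(k)+\alpha_k\min_{j\in\mathcal{N}_i(k)}x_j(k)+(1-\eta_k-\alpha_k)\max_{j\in\mathcal{N}_i(k)}x_j(k),$$ with node-independent parameters $\eta_k\in[0,1]$, $\alpha_k\in[0,1-\eta_k]$; here $\mathcal{N}_i(k)=\{i\}\cup\mathcal{N}_i^-(k)\cup\mathcal{N}_i^+(k)$. Nearest-neighbor graph $\mathcal{G}^\mu_{x(k)}$: $\mathcal{N}_i^-(k)$ is a set of $\min(\mu,|\{j:x_j(k)<x_i(k)\}|)$ nodes $j$ with $x_j(k)<x_i(k)$ whose values are closest to $x_i(k)$ among such nodes (ties broken arbitrarily), and $\mathcal{N}_i^+(k)$ is defined symmetrically from $\{j: x_j(k)>x_i(k)\}$. Nearest-value graph $\mathcal{G}^{\mu v}_{x(k)}$: $\mathcal{N}_i^-(k)$ is a set of nodes $j$ with $x_j(k)<x_i(k)$ having pairwise distinct values, these values being exactly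 the $\mu$ largest distinct values smaller than $x_i(k)$ (all such distinct values if there are fewer than $\mu$); $\mathcal{N}_i^+(k)$ is defined symmetrically using the $\mu$ smallest distinct values larger than $x_i(k)$. *)

(* Defs.v *)
(* States take values in an arbitrary real field R
   (the paper's R is an instance). *)
From HB Require Import structures.
From mathcomp Require Import all_boot all_order all_algebra.
Set Implicit Arguments. Unset Strict Implicit. Unset Printing Implicit Defensive.
Import Order.TTheory GRing.Theory Num.Theory.
Local Open Scope ring_scope.

Section Graphs.
Variables (R : realFieldType) (n : nat).
Implicit Types (x : 'I_n -> R) (i j l : 'I_n).

Definition lower x i : {set 'I_n} := [set j | x j < x i].
Definition upper x i : {set 'I_n} := [set j | x i < x j].

(* Nearest-neighbor graph G^mu_x: Nm i is a set of min(mu, |lower|) nodes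
   of smaller value, whose values are closest to x i among such nodes
   (no excluded smaller node is strictly closer); symmetrically for Np. *)
Definition nn_graph (mu : nat) x (Nm Np : 'I_n -> {set 'I_n}) : Prop :=
  forall i,
    [/\ [/\ Nm i \subset lower x i,
        #|Nm i| = minn mu #|lower x i| &
        (forall j l, j \in Nm i -> l \in lower x i -> l \notin Nm i -> x l <= x j)] &
        [/\ Np i \subset upper x i,
        #|Np i| = minn mu #|upper x i| &
        (forall j l, j \in Np i -> l \in upper x i -> l \notin Np i -> x j <= x l)]].

Definition lower_vals x i : seq R := undup [seq x j | j <- enum (lower x i)].
Definition upper_vals x i : seq R := undup [seq x j | j <- enum (upper x i)].

(* Nearest-value graph G^{mu v}_x: Nm i consists of smaller-valued nodes with
   pairwise distinct values, exactly the min(mu, #distinct smaller values)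
   largest distinct values below x i; symmetrically for Np. *)
Definition nv_graph (mu : nat) x (Nm Np : 'I_n -> {set 'I_n}) : Prop :=
  forall i,
    [/\ [/\ Nm i \subset lower x i,
            {in Nm i &, injective x},
            #|Nm i| = minn mu (size (lower_vals x i)) &
            (forall j l, j \in Nm i -> l \in lower x i ->
               (forall j', j' \in Nm i -> x l != x j') -> x l < x j)] &
        [/\ Np i \subset upper x i,
            {in Np i &, injective x},
            #|Np i| = minn mu (size (upper_vals x i)) &
            (forall j l, j \in Np i -> l \in upper x i ->
               (forall j', j' \in Np i -> x l != x j') -> x j < x l)]].

Definition nbhd (Nm Np : 'I_n -> {set 'I_n}) i : {set 'I_n} :=
  i |: (Nm i :|: Np i).

(* min / max of x over N_i (N_i contains i, so x i is a harmless seed) *)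
Definition nmin x (N : {set 'I_n}) i : R := \big[Order.min/x i]_(j in N) x j.
Definition nmax x (N : {set 'I_n}) i : R := \big[Order.max/x i]_(j in N) x j.

Definition A_step (eta alpha : R) x (Nm Np : 'I_n -> {set 'I_n}) i : R :=
  eta * x i + alpha * nmin x (nbhd Nm Np i) i
  + (1 - eta - alpha) * nmax x (nbhd Nm Np i) i.

End Graphs.

(* Main.v *)
Require Import Defs.
From HB Require Import structures.
From mathcomp Require Import all_boot all_order all_algebra.
From mathcomp Require Import zify.
Import Order.TTheory GRing.Theory Num.Theory.
Local Open Scope ring_scope.
Set Implicit Arguments. Unset Strict Implicit.

Section Core.
Variables (R : realFieldType) (n : nat).

Lemma core_nn (y : 'I_n -> R) mu (Su Sv Lu Lv : {set 'I_n}) j :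
  Su \subset Lu -> #|Su| = minn mu #|Lu| -> (#|Sv| <= mu)%N ->
  (forall j l, j \in Sv -> l \in Lv -> l \notin Sv -> y l <= y j) ->
  Su \subset Lv -> j \in Sv -> j \in Lu ->
  exists2 j', j' \in Su & y j' <= y j.
Proof.
move=> sSL cS cSv hp sSLv jSv jLu.
case: (boolP (j \in Su)) => [jS|jS]; first by exists j.
case: (boolP [exists j' in Su, y j' <= y j]) => [/exists_inP [j' ? ?]|/exists_inP H].
  by exists j'.
have sub : Su \subset Sv.
  apply/subsetP=> l lS; apply/negPn/negP=> lnS; apply: H; exists l => //.
  by apply: hp => //; apply: (subsetP sSLv).
have lt : (#|Su| < #|Sv|)%N by apply: proper_card; apply/properP; split=> //; exists j.
have eqL : #|Su| = #|Lu| by lia.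
move/subset_cardP: (eqL) => /(_ sSL) eqS.
by move: jS; rewrite eqS jLu.
Qed.

Lemma core_nv (y : 'I_n -> R) mu (Su Sv Lu Lv : {set 'I_n}) K j :
  Su \subset Lu -> {in Su &, injective y} -> #|Su| = minn mu K ->
  (forall s, uniq s -> {subset s <= [seq y l | l <- enum Lu]} -> (size s <= K)%N) ->
  (#|Sv| <= mu)%N ->
  (forall j l, j \in Sv -> l \in Lv -> (forall j', j' \in Sv -> y l != y j') -> y l < y j) ->
  Su \subset Lv -> j \in Sv -> j \in Lu -> exists2 j', j' \in Su & y j' <= y j.
Proof.
move=> sSL inj cS hK cSv hp sSLv jSv jLu.
case: (boolP [exists j' in Su, y j' <= y j]) => [/exists_inP [j' ? ?]|/exists_inP H].
  by exists j'.
have H' : forall l, l \in Su -> y j < y l.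
  by move=> l lS; rewrite ltNge; apply/negP=> hl; apply: H; exists l.
set s := [seq y l | l <- enum Su].
have us : uniq s.
  rewrite map_inj_in_uniq ?enum_uniq // => a b; rewrite !mem_enum; exact: inj.
have szs : size s = #|Su| by rewrite size_map cardE.
have njs : y j \notin s.
  apply/negP=> /mapP [l]; rewrite mem_enum => lS e.
  by move: (H' l lS); rewrite e ltxx.
have u2 : uniq (y j :: s) by rewrite /= njs us.
have h1 : (size (y j :: s) <= size [seq y l | l <- enum Sv])%N.
  apply: uniq_leq_size => // z; rewrite inE => /orP [/eqP ->|/mapP [l]].
    by apply/mapP; exists j; rewrite ?mem_enum.
  rewrite mem_enum => lS ->.
  case: (boolP [exists j' in Sv, y l == y j']) => [/exists_inP [j' j'S /eqP ->]|/exists_inP H2].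
    by apply/mapP; exists j'; rewrite ?mem_enum.
  have : y l < y j.
    apply: hp => //; first exact: (subsetP sSLv).
    by move=> j' j'S; apply/negP=> e; apply: H2; exists j'.
  by rewrite ltNge le_eqVlt (H' l lS) orbT.
have h2 : (size (y j :: s) <= K)%N.
  apply: hK => // z; rewrite inE => /orP [/eqP ->|/mapP [l]].
    by apply/mapP; exists j; rewrite ?mem_enum.
  rewrite mem_enum => lS ->; apply/mapP; exists l => //.
  by rewrite mem_enum; apply: (subsetP sSL).
move: h1 h2; rewrite /= szs size_map -cardE. rewrite cS => a b; exfalso; have c := leq_trans a cSv; move: c b; lia.
Qed.

Lemma min_mono (x : 'I_n -> R) (Nu Nv : {set 'I_n}) u v :
  u \in Nu -> x u <= x v ->
  (forall j, j \in Nv -> exists2 j', j' \in Nu & x j' <= x j) ->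
  nmin x Nu u <= nmin x Nv v.
Proof.
move=> uN le h; apply: le_bigmin.
  by apply: le_trans le; apply: bigmin_le_cond.
move=> j /h [j' j'N le']; apply: le_trans le'; exact: bigmin_le_cond.
Qed.

Lemma max_mono (x : 'I_n -> R) (Nu Nv : {set 'I_n}) u v :
  v \in Nv -> x u <= x v ->
  (forall j, j \in Nu -> exists2 j', j' \in Nv & x j <= x j') ->
  nmax x Nu u <= nmax x Nv v.
Proof.
move=> vN le h; apply: bigmax_le.
  by apply: (le_trans le); apply: le_bigmax_cond.
move=> j /h [j' j'N le']; apply: (le_trans le'); exact: le_bigmax_cond.
Qed.

End Core.
Section M.
Variables (R : realFieldType) (n : nat).

Lemma mono_gen (mu : nat) (x : 'I_n -> R) (Nm Np : 'I_n -> {set 'I_n}) u v :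
  (nn_graph mu x Nm Np \/ nv_graph mu x Nm Np) -> x u <= x v ->
  nmin x (nbhd Nm Np u) u <= nmin x (nbhd Nm Np v) v /\
  nmax x (nbhd Nm Np u) u <= nmax x (nbhd Nm Np v) v.
Proof.
move=> hg le.
have uN : forall w, w \in nbhd Nm Np w by move=> w; rewrite /nbhd setU11.
have subL : forall w, (Nm w \subset lower x w) by
  move=> w; case: hg => h; case: (h w) => [[]] //.
have subU : forall w, (Np w \subset upper x w) by
  move=> w; case: hg => h; case: (h w) => _ [] //.
have cNm : forall w, (#|Nm w| <= mu)%N.
  move=> w; case: hg => h.
    by case: (h w) => [[_ c _] _]; rewrite c; exact: geq_minl.
  by case: (h w) => [[_ _ c _] _]; rewrite c; exact: geq_minl.
have cNp : forall w, (#|Np w| <= mu)%N.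
  move=> w; case: hg => h.
    by case: (h w) => [_ [_ c _]]; rewrite c; exact: geq_minl.
  by case: (h w) => [_ [_ _ c _]]; rewrite c; exact: geq_minl.
split.
  apply: min_mono => // j; rewrite /nbhd !inE => /orP [/eqP ->|/orP [jm|jp]].
  - by exists u; rewrite ?uN.
  - case: (leP (x u) (x j)) => [h|h]; first by exists u; rewrite ?uN.
    have jL : j \in lower x u by rewrite inE.
    have sLv : Nm u \subset lower x v.
      apply/subsetP=> l /(subsetP (subL u)); rewrite !inE => hl; exact: lt_le_trans hl le.
    suff [j' j'N hj'] : exists2 j', j' \in Nm u & x j' <= x j.
      by exists j' => //; rewrite /nbhd !inE j'N orbT.
    case: hg => hg.
      case: (hg u) => [[_ cu _] _]; case: (hg v) => [[_ _ pv] _].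
      exact: (core_nn (subL u) cu (cNm v) pv sLv jm jL).
    case: (hg u) => [[_ iu cu _] _]; case: (hg v) => [[_ _ _ pv] _].
    apply: (core_nv (subL u) iu cu _ (cNm v) pv sLv jm jL).
    move=> s us ss; apply: uniq_leq_size => // z /ss; by rewrite mem_undup.
  - exists u; rewrite ?uN //; apply: (le_trans le).
    by move/(subsetP (subU v)): jp; rewrite inE => /ltW.
apply: max_mono => // j; rewrite /nbhd !inE => /orP [/eqP ->|/orP [jm|jp]].
- by exists v; rewrite ?uN.
- exists v; rewrite ?uN //; apply: le_trans le.
  by move/(subsetP (subL u)): jm; rewrite inE => /ltW.
- case: (leP (x j) (x v)) => [h|h]; first by exists v; rewrite ?uN.
  have jL : j \in upper x v by rewrite inE.
  have sLv : Np v \subset upper x u.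
    apply/subsetP=> l /(subsetP (subU v)); rewrite !inE => hl; exact: le_lt_trans le hl.
  suff [j' j'N hj'] : exists2 j', j' \in Np v & - x j' <= - x j.
    by exists j'; [rewrite /nbhd !inE j'N !orbT | rewrite -lerN2].
  case: hg => hg.
    case: (hg v) => [_ [_ cu _]]; case: (hg u) => [_ [_ _ pv]].
    apply: (core_nn (y := fun i => - x i) (subU v) cu (cNp u) _ sLv jp jL).
    by move=> a b ha hb hc; rewrite lerN2; apply: pv.
  case: (hg v) => [_ [_ iu cu _]]; case: (hg u) => [_ [_ _ _ pv]].
  apply: (core_nv (y := fun i => - x i) (subU v) _ cu _ (cNp u) _ sLv jp jL).
  + by move=> a b ha hb /oppr_inj; apply: iu.
  + move=> s us ss.
    rewrite -(size_map (fun r => - r)).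
    apply: uniq_leq_size; first by rewrite map_inj_uniq //; exact: oppr_inj.
    move=> z /mapP [w /ss /mapP [l lL ->] ->]; rewrite opprK mem_undup.
    by apply/mapP; exists l.
  + move=> a b ha hb hc; rewrite ltrN2; apply: pv => // j' hj'.
    by rewrite -eqr_opp; apply: hc.
Qed.

End M.

Theorem lemma2 (R : realFieldType) (n : nat) (hn : (3 <= n)%N) (mu : nat)
  (hmu : (0 < mu)%N)
  (x : nat -> 'I_n -> R) (eta alpha : nat -> R)
  (Nm Np : nat -> 'I_n -> {set 'I_n})
  (heta : forall k, 0 <= eta k <= 1)
  (halpha : forall k, 0 <= alpha k <= 1 - eta k)
  (hgraph : (forall k, nn_graph mu (x k) (Nm k) (Np k)) \/
            (forall k, nv_graph mu (x k) (Nm k) (Np k)))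
  (hupd : forall k i, x k.+1 i = A_step (eta k) (alpha k) (x k) (Nm k) (Np k) i) :
  forall (u v : 'I_n) (k : nat),
    (x k u = x k v -> x k.+1 u = x k.+1 v) /\
    (x k u < x k v -> x k.+1 u <= x k.+1 v).
Proof.
move=> u v k.
have step : forall a b, x k a <= x k b -> x k.+1 a <= x k.+1 b.
  move=> a b le; rewrite !hupd /A_step.
  have hg : nn_graph mu (x k) (Nm k) (Np k) \/ nv_graph mu (x k) (Nm k) (Np k).
    by case: hgraph => h; [left|right].
  case: (mono_gen hg le) => h1 h2.
  have /andP [e0 e1] := heta k; have /andP [a0 a1] := halpha k.
  have c0 : 0 <= 1 - eta k - alpha k by rewrite subr_ge0.
  by apply: lerD; [apply: lerD|]; apply: ler_wpM2l.
split; first by move=> e; apply/le_anti; rewrite !step // e.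
by move/ltW; exact: step.
Qed.
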